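(* Let $d\ge 1$, let $W\in\mathbb{R}^{d\times d}$ be a weight matrix, let $x\in\mathbb{R}^d$ be an input, and let $M\in\{0,1\}^{d\times d}$ be the (unknown) binary mask actually used, so that the observed intermediate output is $y=(W\odot M)x$. Suppose an attacker draws a guessed mask $\hat M\in\{0,1\}^{d\times d}$ from a probability distribution $P$ on $\{0,1\}^{d\times d}$ such that $W\odot \hat M$ is invertible for every $\hat M$ with $P(\hat M)>0$, and reconstructs the input as $\hat x=(W\odot\hat M)^{-1}y$. Then $$\mathbb{E}_{\hat M\sim P}\,\|x-\hat x\|\;\ge\;\sum_{\hat M}P(\hat M)\,\frac{\sigma_{\min}\bigl(W\odot(\hat M-M)\bigr)}{\sigma_{\max}\bigl(W\odot \hat M\bigr)}\,\|x\|,$$ where the sum ranges over the support of $P$.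
   Context: $\odot$ denotes the entrywise (Hadamard) product of matrices; $\|\cdot\|$ is the Euclidean norm on $\mathbb{R}^d$; $\sigma_{\min}(A)$ and $\sigma_{\max}(A)$ denote the smallest and largest singular values of a square matrix $A$. The setting models a client-side layer in split learning whose weights are masked by a randomly sampled binary mask; the attacker knows $W$ and $y$ but not $M$. *)

(* Defs.v *)
From mathcomp Require Import all_boot all_order all_algebra.
From mathcomp Require Import boolp classical_sets reals.
Set Implicit Arguments. Unset Strict Implicit. Unset Printing Implicit Defensive.
Import Order.TTheory GRing.Theory Num.Theory.
Local Open Scope ring_scope.
Local Open Scope classical_set_scope.

Definition hadamard_mask (R : realType) (d : nat) (W : 'M[R]_d) (M : 'M[bool]_d)
  : 'M[R]_d := \matrix_(i, j) (W i j * (M i j)%:R).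

Definition hadamard_mask_diff (R : realType) (d : nat) (W : 'M[R]_d)
  (Mh M : 'M[bool]_d) : 'M[R]_d :=
  \matrix_(i, j) (W i j * ((Mh i j)%:R - (M i j)%:R)).

Definition enorm (R : realType) (d : nat) (v : 'cV[R]_d) : R :=
  Num.sqrt (\sum_i (v i 0) ^+ 2).

Definition singular_values (R : realType) (d : nat) (A : 'M[R]_d) : set R :=
  [set s | 0 <= s /\ eigenvalue (A^T *m A) (s ^+ 2)].

Definition sigma_min (R : realType) (d : nat) (A : 'M[R]_d) : R :=
  inf (singular_values A).
Definition sigma_max (R : realType) (d : nat) (A : 'M[R]_d) : R :=
  sup (singular_values A).

(* Main.v *)
Require Import Defs.
From mathcomp Require Import all_boot all_order all_algebra.
From mathcomp Require Import boolp classical_sets reals.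
From mathcomp Require Import ring lra.
Import Order.TTheory GRing.Theory Num.Theory.
Set Implicit Arguments. Unset Strict Implicit. Unset Printing Implicit Defensive.
Local Open Scope ring_scope.

Section Aux.
Variable R : realType.
Variable n : nat.
Implicit Types (u v w x y : 'cV[R]_n) (A S T : 'M[R]_n).

Definition dotv u v : R := \sum_i u i 0 * v i 0.
Definition qf S x := dotv x (S *m x).

Lemma dotvC u v : dotv u v = dotv v u.
Proof. by apply: eq_bigr => i _; rewrite mulrC. Qed.

Lemma dotvDr u v w : dotv u (v + w) = dotv u v + dotv u w.
Proof. by rewrite /dotv -big_split /=; apply: eq_bigr => i _; rewrite mxE mulrDr. Qed.

Lemma dotvZr a u v : dotv u (a *: v) = a * dotv u v.
Proof. by rewrite /dotv mulr_sumr; apply: eq_bigr => i _; rewrite mxE mulrCA. Qed.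

Lemma dotvDl u v w : dotv (v + w) u = dotv v u + dotv w u.
Proof. by rewrite dotvC dotvDr !(dotvC u). Qed.

Lemma dotvZl a u v : dotv (a *: v) u = a * dotv v u.
Proof. by rewrite dotvC dotvZr dotvC. Qed.

Lemma dotv_ge0 u : 0 <= dotv u u.
Proof. by apply: sumr_ge0 => i _; rewrite -expr2 sqr_ge0. Qed.

Lemma dotv_eq0 u : (dotv u u == 0) = (u == 0).
Proof.
apply/idP/idP; last by move/eqP->; rewrite /dotv big1 // => i _; rewrite mxE mul0r.
rewrite /dotv psumr_eq0; last by move=> i _; rewrite -expr2 sqr_ge0.
move/allP => H; apply/eqP/matrixP => i j; rewrite (ord1 j) mxE.
by have := H i (mem_index_enum i); rewrite /= -expr2 sqrf_eq0 => /eqP.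
Qed.

Lemma dotv_gt0 u : u != 0 -> 0 < dotv u u.
Proof. by move=> u0; rewrite lt_def dotv_eq0 u0 dotv_ge0. Qed.

Lemma dotv_mulmx u A v : dotv u (A *m v) = dotv (A^T *m u) v.
Proof.
rewrite /dotv.
under eq_bigr do rewrite mxE big_distrr /=.
rewrite exchange_big /=; apply: eq_bigr => j _.
by rewrite mxE big_distrl /=; apply: eq_bigr => i _; rewrite !mxE mulrCA mulrA.
Qed.

Lemma dotv_le u i : u i 0 ^+ 2 <= dotv u u.
Proof.
rewrite /dotv (bigD1 i) //= expr2 lerDl.
by apply: sumr_ge0 => j _; rewrite -expr2 sqr_ge0.
Qed.

Lemma qf_bound S x : `|qf S x| <= (\sum_i \sum_j `|S i j|) * dotv x x.
Proof.
rewrite /qf /dotv.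
under eq_bigr do rewrite mxE big_distrr /=.
rewrite mulr_suml; apply: le_trans (ler_norm_sum _ _ _) _.
apply: ler_sum => i _; rewrite mulr_suml.
apply: le_trans (ler_norm_sum _ _ _) _.
apply: ler_sum => j _.
rewrite -/(dotv x x) mulrCA normrM mulrC.
rewrite [X in _ <= X]mulrC; apply: ler_wpM2r => //.
have h1 := dotv_le x i; have h2 := dotv_le x j.
have h3 : 0 <= (x i 0 - x j 0) ^+ 2 by apply: sqr_ge0.
have h4 : 0 <= (x i 0 + x j 0) ^+ 2 by apply: sqr_ge0.
have : `|x i 0 * x j 0| <= (x i 0 ^+ 2 + x j 0 ^+ 2) / 2.
  case: (lerP 0 (x i 0 * x j 0)) => h.
    rewrite ger0_norm //; nra.
  rewrite ltr0_norm //; nra.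
move=> h; apply: le_trans h _; lra.
Qed.


Lemma quad_disc (a b c : R) : 0 <= c ->
  (forall t, 0 <= a + 2 * t * b + t ^+ 2 * c) -> b ^+ 2 <= a * c.
Proof.
move=> c0 H; case: (ltrP 0 c) => hc.
  have := H (- b / c).
  have -> : a + 2 * (- b / c) * b + (- b / c) ^+ 2 * c = a - b ^+ 2 / c.
    by field; rewrite gt_eqF.
  rewrite subr_ge0 ler_pdivrMr //; lra.
have c00 : c = 0 by apply/eqP; rewrite eq_le hc c0.
subst c; rewrite mulr0.
case: (eqVneq b 0) => [->|bn0]; first by rewrite expr0n.
have := H (- (a + 1) / (2 * b)).
have -> : a + 2 * (- (a + 1) / (2 * b)) * b + (- (a + 1) / (2 * b)) ^+ 2 * 0 = -1.
  by field; rewrite bn0.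
lra.
Qed.

Lemma qf_sym_cross S x y : S^T = S -> dotv y (S *m x) = dotv x (S *m y).
Proof. by move=> sS; rewrite dotv_mulmx sS dotvC. Qed.

Lemma qf_expand S x y t : S^T = S ->
  qf S (x + t *: y) = qf S x + 2 * t * dotv x (S *m y) + t ^+ 2 * qf S y.
Proof.
move=> sS; rewrite /qf mulmxDr -scalemxAr dotvDl !dotvDr !dotvZl !dotvZr.
rewrite (qf_sym_cross _ _ sS); ring.
Qed.

Lemma psd_cs S x y : S^T = S -> (forall z, 0 <= qf S z) ->
  dotv x (S *m y) ^+ 2 <= qf S x * qf S y.
Proof.
move=> sS psd; apply: quad_disc => // t.
by rewrite -qf_expand.
Qed.


Lemma sumabs_ge0 (A : 'M[R]_n) : 0 <= \sum_i \sum_j `|A i j|.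
Proof. by apply: sumr_ge0 => i _; apply: sumr_ge0. Qed.

Lemma qf_le S x : qf S x <= (\sum_i \sum_j `|S i j|) * dotv x x.
Proof. exact: le_trans (ler_norm _) (qf_bound _ _). Qed.

Lemma psd_notunit T : T^T = T -> (forall z, 0 <= qf T z) ->
  (forall e, 0 < e -> exists2 x, x != 0 & qf T x < e * dotv x x) ->
  T \notin unitmx.
Proof.
move=> sT psd H; apply/negP => Tu.
pose U := invmx T.
pose K := \sum_i \sum_j `|(U^T *m U) i j|.
pose C := \sum_i \sum_j `|T i j|.
have K0 : 0 <= K by apply: sumabs_ge0.
have C0 : 0 <= C by apply: sumabs_ge0.
have main : forall x, dotv x x <= K * C * qf T x.
  move=> x.
  have e1 : dotv x x = qf (U^T *m U) (T *m x).
    by rewrite /qf -mulmxA dotv_mulmx trmxK mulKmx.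
  have e2 := qf_le (U^T *m U) (T *m x).
  rewrite -/K in e2.
  pose b := dotv (T *m x) (T *m x).
  have e3 : b = dotv x (T *m (T *m x)) by rewrite dotv_mulmx sT.
  have cs := psd_cs x (T *m x) sT psd.
  rewrite -e3 in cs.
  have e4 := qf_le T (T *m x). rewrite -/C -/b in e4.
  have b0 : 0 <= b by apply: dotv_ge0.
  have q0 := psd x. have q1 := psd (T *m x).
  have hb : b <= C * qf T x.
    case: (eqVneq b 0) => [->|bn0]; first by rewrite mulr_ge0.
    have bp : 0 < b by rewrite lt_def bn0 b0.
    have : b ^+ 2 <= qf T x * C * b.
      apply: le_trans cs _; rewrite -mulrA; apply: ler_wpM2l => //.
    move=> h; nra.
  rewrite e1; apply: le_trans e2 _; rewrite -mulrA; apply: ler_wpM2l => //.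
pose e := (K * C + 1)^-1.
have KC0 : 0 <= K * C by apply: mulr_ge0.
have ep : 0 < e by rewrite invr_gt0; lra.
have ee : K * C * e = 1 - e.
  rewrite /e; field; rewrite gt_eqF //; lra.
have [x xn0 hx] := H e ep.
have dp := dotv_gt0 xn0.
have m := main x.
have : K * C * qf T x <= K * C * (e * dotv x x).
  by apply: ler_wpM2l => //; apply: ltW.
rewrite mulrA ee; nra.
Qed.


Lemma eigen_notunit (g : 'M[R]_n) a : eigenvalue g a = (g - a%:M \notin unitmx).
Proof. by rewrite /eigenvalue /eigenspace kermx_eq0 row_free_unit. Qed.

Lemma dotv0r u : dotv u 0 = 0.
Proof. by rewrite /dotv big1 // => i _; rewrite mxE mulr0. Qed.

Lemma dotvNr u v : dotv u (- v) = - dotv u v.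
Proof. by rewrite -scaleN1r dotvZr mulN1r. Qed.

Lemma qf_shift S a x : qf (S - a%:M) x = qf S x - a * dotv x x.
Proof. by rewrite /qf mulmxBl mul_scalar_mx dotvDr dotvNr dotvZr. Qed.

Lemma min_eig S : (0 < n)%N -> S^T = S ->
  exists mu, eigenvalue S mu /\ forall x, mu * dotv x x <= qf S x.
Proof.
move=> hn sS.
pose Q : set R := fun r => exists2 x, x != 0 & r = qf S x / dotv x x.
pose C := \sum_i \sum_j `|S i j|.
have lbQ : lbound Q (- C).
  move=> r [x xn0 ->]; have dp := dotv_gt0 xn0.
  rewrite ler_pdivlMr //; have := qf_bound S x; rewrite -/C.
  rewrite ler_norml => /andP[h _]; lra.
have neQ : exists r, Q r.
  pose x0 : 'cV[R]_n := const_mx 1.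
  have x0n : x0 != 0.
    apply/negP => /eqP/matrixP/(_ (Ordinal hn) 0); rewrite !mxE => /eqP.
    by rewrite oner_eq0.
  by exists (qf S x0 / dotv x0 x0); exists x0.
have hQ : has_lbound Q by exists (- C).
pose mu := inf Q.
have hlb : forall x, x != 0 -> mu * dotv x x <= qf S x.
  move=> x xn0; have dp := dotv_gt0 xn0.
  rewrite -ler_pdivlMr //; apply: ge_inf => //; by exists x.
exists mu; split; last first.
  move=> x; case: (eqVneq x 0) => [->|]; last exact: hlb.
  by rewrite /qf mulmx0 !dotv0r mulr0.
rewrite eigen_notunit; apply: psd_notunit.
- by rewrite linearB /= tr_scalar_mx sS.
- move=> z; rewrite qf_shift subr_ge0.
  case: (eqVneq z 0) => [->|]; last exact: hlb.
  by rewrite /qf mulmx0 !dotv0r mulr0.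
- move=> e ep.
  have : inf Q < mu + e by rewrite /mu; lra.
  move=> /(inf_lt neQ) [r [x xn0 ->] hr]; exists x => //.
  have dp := dotv_gt0 xn0.
  rewrite qf_shift; move: hr; rewrite ltr_pdivrMr //; lra.
Qed.


Lemma eig_opp S a : eigenvalue (- S) a -> eigenvalue S (- a).
Proof.
move/eigenvalueP => [v hv vn0]; apply/eigenvalueP; exists v => //.
by rewrite scaleNr -hv mulmxN opprK.
Qed.

Lemma max_eig S : (0 < n)%N -> S^T = S ->
  exists la, eigenvalue S la /\ forall x, qf S x <= la * dotv x x.
Proof.
move=> hn sS.
have sN : (- S)^T = - S by rewrite linearN /= sS.
have [mu [he hmu]] := min_eig hn sN.
exists (- mu); split; first exact: eig_opp.
move=> x; have := hmu x; rewrite /qf mulNmx dotvNr; lra.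
Qed.

Lemma eig_vec S a : S^T = S -> eigenvalue S a ->
  exists2 w, w != 0 & qf S w = a * dotv w w.
Proof.
move=> sS /eigenvalueP [v hv vn0]; exists v^T; first by rewrite trmx_eq0.
have : S *m v^T = a *: v^T by rewrite -sS -trmx_mul hv linearZ.
by rewrite /qf => ->; rewrite dotvZr.
Qed.


Lemma exists_nz : (0 < n)%N -> exists x : 'cV[R]_n, x != 0.
Proof.
move=> hn; exists (const_mx 1).
apply/negP => /eqP/matrixP/(_ (Ordinal hn) 0); rewrite !mxE => /eqP.
by rewrite oner_eq0.
Qed.

Lemma enorm_dotv v : enorm v = Num.sqrt (dotv v v).
Proof. by rewrite /enorm /dotv; congr Num.sqrt; apply: eq_bigr => i _; rewrite expr2. Qed.

Lemma enorm_ge0 v : 0 <= enorm v.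
Proof. by rewrite enorm_dotv sqrtr_ge0. Qed.

Lemma enorm_sq v : enorm v ^+ 2 = dotv v v.
Proof. by rewrite enorm_dotv sqr_sqrtr // dotv_ge0. Qed.

Lemma qf_gram (B : 'M[R]_n) x : qf (B^T *m B) x = dotv (B *m x) (B *m x).
Proof. by rewrite /qf -mulmxA dotv_mulmx trmxK. Qed.

Lemma gram_sym (B : 'M[R]_n) : (B^T *m B)^T = B^T *m B.
Proof. by rewrite trmx_mul trmxK. Qed.

Lemma sigma_min_bound (B : 'M[R]_n) x : (0 < n)%N ->
  sigma_min B * enorm x <= enorm (B *m x).
Proof.
move=> hn.
have [mu [he hmu]] := min_eig hn (gram_sym B).
have [w wn0 hw] := eig_vec (gram_sym B) he.
have mu0 : 0 <= mu.
  have dp := dotv_gt0 wn0; move: hw; rewrite qf_gram => hw.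
  have := dotv_ge0 (B *m w); rewrite hw => h.
  by rewrite -(pmulr_lge0 _ dp).
have inSV : singular_values B (Num.sqrt mu).
  by split; [apply: sqrtr_ge0 | rewrite sqr_sqrtr].
have hinf : sigma_min B <= Num.sqrt mu.
  apply: ge_inf => //; exists 0 => s [] //.
case: (lerP (sigma_min B) 0) => hs.
  by apply: le_trans (enorm_ge0 _); apply: mulr_le0_ge0 => //; apply: enorm_ge0.
have h1 : sigma_min B ^+ 2 <= mu.
  have sq := sqr_sqrtr mu0; have sq0 := sqrtr_ge0 mu; nra.
have h2 := hmu x; rewrite qf_gram in h2.
have a0 := enorm_ge0 x; have b0 := enorm_ge0 (B *m x).
have e1 := enorm_sq x; have e2 := enorm_sq (B *m x).
have d0 := dotv_ge0 x.
have : (sigma_min B * enorm x) ^+ 2 <= enorm (B *m x) ^+ 2.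
  rewrite exprMn e1 e2; apply: le_trans h2; apply: ler_wpM2r => //.
move=> h; have m0 : 0 <= sigma_min B * enorm x by apply: mulr_ge0 => //; apply: ltW.
nra.
Qed.

Lemma sigma_max_bound (A : 'M[R]_n) z : (0 < n)%N ->
  0 <= sigma_max A /\ enorm (A *m z) <= sigma_max A * enorm z.
Proof.
move=> hn.
have [la [he hla]] := max_eig hn (gram_sym A).
have la0 : 0 <= la.
  have [x xn0] := exists_nz hn; have dp := dotv_gt0 xn0.
  have := hla x; rewrite qf_gram => h.
  have := dotv_ge0 (A *m x) => h'.
  by rewrite -(pmulr_lge0 _ dp); apply: le_trans h.
have inSV : singular_values A (Num.sqrt la).
  by split; [apply: sqrtr_ge0 | rewrite sqr_sqrtr].
have ub : ubound (singular_values A) (Num.sqrt la).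
  move=> s [s0 hs]; have [w wn0 hw] := eig_vec (gram_sym A) hs.
  have dp := dotv_gt0 wn0.
  have := hla w; rewrite hw ler_pM2r // => h.
  have sq := sqr_sqrtr la0; have sq0 := sqrtr_ge0 la; nra.
have hsup : Num.sqrt la <= sigma_max A.
  by apply: ub_le_sup => //; exists (Num.sqrt la).
have sm0 : 0 <= sigma_max A by apply: le_trans hsup; apply: sqrtr_ge0.
split => //.
have h1 : la <= sigma_max A ^+ 2.
  have sq := sqr_sqrtr la0; have sq0 := sqrtr_ge0 la; nra.
have h2 := hla z; rewrite qf_gram in h2.
have a0 := enorm_ge0 z; have b0 := enorm_ge0 (A *m z).
have e1 := enorm_sq z; have e2 := enorm_sq (A *m z).
have d0 := dotv_ge0 z.
have : enorm (A *m z) ^+ 2 <= (sigma_max A * enorm z) ^+ 2.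
  rewrite exprMn e1 e2; apply: le_trans h2 _; apply: ler_wpM2r => //.
move=> h; have m0 : 0 <= sigma_max A * enorm z by apply: mulr_ge0.
nra.
Qed.

End Aux.

Lemma term (R : realType) (d : nat) (hd : (0 < d)%N)
  (W : 'M[R]_d) (x : 'cV[R]_d) (M Mh : 'M[bool]_d) :
  hadamard_mask W Mh \in unitmx ->
  sigma_min (hadamard_mask_diff W Mh M) / sigma_max (hadamard_mask W Mh) * enorm x
  <= enorm (x - invmx (hadamard_mask W Mh) *m (hadamard_mask W M *m x)).
Proof.
move=> Au.
set A := hadamard_mask W Mh; set B := hadamard_mask W M.
set D := hadamard_mask_diff W Mh M.
have hD : D = A - B.
  by apply/matrixP => i j; rewrite !mxE mulrBr.
have -> : x - invmx A *m (B *m x) = invmx A *m (D *m x).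
  by rewrite hD mulmxBl mulmxBr mulKmx.
set z := invmx A *m (D *m x).
have Az : A *m z = D *m x by rewrite /z mulKVmx.
have h1 := sigma_min_bound D x hd.
have [sm0 h2] := sigma_max_bound A z hd.
rewrite Az in h2.
have z0 := enorm_ge0 z.
case: (eqVneq (sigma_max A) 0) => [->|nz].
  by rewrite invr0 mulr0 mul0r.
have sp : 0 < sigma_max A by rewrite lt_def nz sm0.
rewrite mulrAC ler_pdivrMr //.
apply: (le_trans h1); apply: (le_trans h2); rewrite mulrC //.
Qed.

Theorem theorem1 (R : realType) (d : nat) (hd : (0 < d)%N)
  (W : 'M[R]_d) (x : 'cV[R]_d) (M : 'M[bool]_d)
  (P : {ffun 'M[bool]_d -> R})
  (P_ge0 : forall Mh, 0 <= P Mh)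
  (P_sum1 : \sum_Mh P Mh = 1)
  (P_inv : forall Mh, 0 < P Mh -> hadamard_mask W Mh \in unitmx) :
  let y := hadamard_mask W M *m x in
  let xhat := fun Mh => invmx (hadamard_mask W Mh) *m y in
  \sum_Mh P Mh * enorm (x - xhat Mh)
  >= \sum_(Mh | 0 < P Mh)
       P Mh * (sigma_min (hadamard_mask_diff W Mh M)
               / sigma_max (hadamard_mask W Mh)) * enorm x.
Proof.
cbv zeta.
rewrite [X in _ <= X](bigID (fun Mh => 0 < P Mh)) /=.
rewrite -[X in X <= _]addr0; apply: lerD; last first.
  by apply: sumr_ge0 => Mh _; apply: mulr_ge0 => //; apply: enorm_ge0.
apply: ler_sum => Mh hP.
rewrite -mulrA; apply: ler_wpM2l => //.
exact: term hd W x M Mh (P_inv Mh hP).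
Qed.
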